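(* Let $q$ be odd and let $U$ be an intersecting family of polynomials over $\mathbb{F}_q$ of degree at most $2$ with $|U|>\frac{q^2+2q-1}{2}$. Suppose $H\subseteq U$ has more than $\frac{q^2+q}{2}$ elements and there exist $\alpha,\beta\in\mathbb{F}_q$ with $h(\alpha)=\beta$ for all $h\in H$. Then $f(\alpha)=\beta$ for every $f\in U$.
   Context: A set of polynomials over $\mathbb{F}_q$ is intersecting if for any two members $f_1,f_2$ the graphs $\{(x,f_i(x)):x\in\mathbb{F}_q\}$ share at least one point. *)

(* Defs.v *)
From HB Require Import structures.
From mathcomp Require Import all_boot all_order all_algebra all_field.
From mathcomp Require Import finmap.
Set Implicit Arguments. Unset Strict Implicit. Unset Printing Implicit Defensive.
Import GRing.Theory.
Local Open Scope ring_scope.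

Definition intersecting (F : finFieldType) (U : {fset {poly F}}) : Prop :=
  forall f1 f2 : {poly F}, f1 \in U -> f2 \in U -> exists x : F, f1.[x] = f2.[x].

(* Main.v *)
Require Import Defs.
From HB Require Import structures.
From mathcomp Require Import all_boot all_order all_algebra all_field.
From mathcomp Require Import finmap.
Import GRing.Theory.
Local Open Scope ring_scope.
From mathcomp Require Import zify ring.
Lemma horner3 (F : fieldType) (p : {poly F}) y : (size p <= 3)%N ->
  p.[y] = p`_0 + p`_1 * y + p`_2 * y^+2.
Proof.
move=> Hs; rewrite (horner_coef_wide y Hs) !big_ord_recl big_ord0 /=.
rewrite expr0 mulr1 expr1 addr0 addrA.
by [].
Qed.

Lemma poly3_eq (F : fieldType) (p p' : {poly F}) : (size p <= 3)%N -> (size p' <= 3)%N ->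
  p`_0 = p'`_0 -> p`_1 = p'`_1 -> p`_2 = p'`_2 -> p = p'.
Proof.
move=> s1 s2 e0 e1 e2; apply/polyP => i.
case: i => [|[|[|i]]] //.
by rewrite !nth_default //; apply: leq_trans _ (isT : (3 <= i.+3)%N).
Qed.

Lemma pair_sym (F : finFieldType) (x1 x2 y1 y2 : F) : [set x1; x2] = [set y1; y2] ->
  x1 + x2 = y1 + y2 /\ x1 * x2 = y1 * y2.
Proof.
move/setP=> E.
have A : y2 \in [set x1; x2] by rewrite E !inE eqxx orbT.
have B : y1 \in [set x1; x2] by rewrite E !inE eqxx.
have C : x2 \in [set y1; y2] by rewrite -E !inE eqxx orbT.
have D : x1 \in [set y1; y2] by rewrite -E !inE eqxx.
move: A B C D; rewrite !inE.
move=> /orP[]/eqP h1 /orP[]/eqP h2 /orP[]/eqP h3 /orP[]/eqP h4; subst; split; ring.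
Qed.

Arguments pair_sym {F x1 x2 y1 y2}.
Arguments poly3_eq {F p p'}.
Arguments horner3 {F p} y.

Lemma lemma7_aux (F : finFieldType) (U H : {fset {poly F}}) (alpha beta : F) :
  odd #|F| ->
  intersecting U ->
  (forall f : {poly F}, f \in U -> (size f <= 3)%N) ->
  (#|F| ^ 2 + 2 * #|F| - 1 < 2 * #|` U|)%N ->
  (H `<=` U)%fset ->
  (#|F| ^ 2 + #|F| < 2 * #|` H|)%N ->
  (forall h : {poly F}, h \in H -> h.[alpha] = beta) ->
  forall f : {poly F}, f \in U -> f.[alpha] = beta.
Proof.
move=> _ Hint Hsz HU HsubH HH Hval f fU.
case: (eqVneq f.[alpha] beta) => // Hne; exfalso.
pose c := beta - f.[alpha].
have c0 : c != 0 by rewrite subr_eq0 eq_sym.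
pose a (h : {poly F}) := (h - f)`_1 + (h - f)`_2 * alpha *+ 2.
pose phi (h : {poly F}) : {set F} :=
  if [pick x | ((h - f).[x] == 0) && (x != alpha)] is Some x then
    [set (x - alpha)^-1; - (a h / c) - (x - alpha)^-1] else set0.
have szg : forall h, h \in H -> (size (h - f)%R <= 3)%N.
  move=> h hH; apply: leq_trans (size_polyD _ _) _.
  by rewrite geq_max size_polyN !Hsz //; apply: (fsubsetP HsubH).
have gal : forall h, h \in H -> (h - f).[alpha] = c.
  by move=> h hH; rewrite hornerD hornerN Hval.
have Hroot : forall h, h \in H -> exists x, ((h - f).[x] == 0) && (x != alpha).
  move=> h hH; have [x hx] := Hint h f (fsubsetP HsubH h hH) fU.
  exists x; rewrite hornerD hornerN hx subrr eqxx /=.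
  by apply/eqP => xa; subst x; rewrite -hx Hval ?eqxx in Hne.
have Hphi : forall h, h \in H -> exists x, [/\ x != alpha, (h - f).[x] = 0 &
    phi h = [set (x - alpha)^-1; - (a h / c) - (x - alpha)^-1]].
  move=> h hH; rewrite /phi; case: pickP => [x /andP[/eqP h1 h2] | none].
    by exists x.
  by have [x hx] := Hroot h hH; rewrite none in hx.
have Hc : forall h, h \in H -> c = (h - f)`_0 + (h - f)`_1 * alpha + (h - f)`_2 * alpha ^+ 2.
  by move=> h hH; rewrite -(gal h hH) (horner3 alpha (szg h hH)).
have Vieta : forall h x, h \in H -> x != alpha -> (h - f).[x] = 0 ->
   (x - alpha)^-1 * (- (a h / c) - (x - alpha)^-1) = (h - f)`_2 / c.
  move=> h x hH h2 h1.
  have t0 : x - alpha != 0 by rewrite subr_eq0.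
  have key : c + a h * (x - alpha) + (h - f)`_2 * (x - alpha) ^+ 2 = 0.
    apply: (etrans _ h1); rewrite (horner3 x (szg h hH)) (Hc h hH) /a; ring.
  have -> : (h - f)`_2 = ((h - f)`_2 * (x - alpha) ^+ 2) / (x - alpha) ^+ 2.
    by rewrite mulfK // expf_neq0.
  have -> : (h - f)`_2 * (x - alpha) ^+ 2 = - (c + a h * (x - alpha)).
    by apply/eqP; rewrite -addr_eq0 addrC key.
  by field; rewrite c0 t0.
have inj : {in H &, injective phi}.
  move=> h h' hH hH'.
  have [x [xa hx ->]] := Hphi h hH.
  have [x' [xa' hx' ->]] := Hphi h' hH'.
  move=> E'; have [Es Ep] := pair_sym E'.
  rewrite (Vieta h x hH xa hx) (Vieta h' x' hH' xa' hx') in Ep.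
  have ea : a h = a h'.
    by move: Es; rewrite addrCA subrr addr0 addrCA subrr addr0 => /oppr_inj /(mulIf (invr_neq0 c0)).
  have e2 : (h - f)`_2 = (h' - f)`_2 by apply: (mulIf (invr_neq0 c0)).
  have e1 : (h - f)`_1 = (h' - f)`_1.
    by move: ea; rewrite /a e2 => /addIr.
  have e0 : (h - f)`_0 = (h' - f)`_0.
    by move: (Hc h hH) (Hc h' hH'); rewrite e1 e2 => -> /addIr /addIr.
  have := poly3_eq (szg h hH) (szg h' hH') e0 e1 e2.
  by move/addIr.
have Huniq : uniq (map phi H) by rewrite map_inj_in_uniq // fset_uniq.
pose T := [set A : {set F} | #|A| == 1%N] :|: [set A : {set F} | #|A| == 2].
pose S := T :\ [set (0:F)].
have sub : {subset map phi H <= enum S}.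
  move=> A /mapP [h hH ->]; rewrite mem_enum.
  have [x [xa _ ->]] := Hphi h hH.
  rewrite !inE cards2; apply/andP; split.
    apply/negP => /eqP E.
    have : (x - alpha)^-1 \in [set (0:F)] by rewrite -E !inE eqxx.
    by rewrite inE invr_eq0 subr_eq0 (negbTE xa).
  by case: (_ != _).
have := uniq_leq_size Huniq sub; rewrite size_map -cardE => hS.
have cT : (#|T| <= 'C(#|F|, 1) + 'C(#|F|, 2))%N.
  by rewrite -!card_draws cardsU leq_subr.
have cS : #|T| = (#|S|.+1)%N.
  by rewrite (cardsD1 [set (0:F)] T) !inE cards1.
have b2 : (2 * 'C(#|F|, 2) = #|F| * #|F|.-1)%N.
  by rewrite -mul_bin_diag bin1.
rewrite bin1 in cT.
move: HH hS cT cS b2; rewrite -/S.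
set q := #|F|; set n := size _; set k := 'C(q, 2); set m := #|S|.
move=> *; nia.
Qed.

Local Open Scope fset_scope.

Theorem lemma7 (F : finFieldType) (U H : {fset {poly F}}) (alpha beta : F) :
  odd #|F| ->
  intersecting U ->
  (forall f : {poly F}, f \in U -> (size f <= 3)%N) ->
  (#|F| ^ 2 + 2 * #|F| - 1 < 2 * #|` U|)%N ->
  H `<=` U ->
  (#|F| ^ 2 + #|F| < 2 * #|` H|)%N ->
  (forall h : {poly F}, h \in H -> h.[alpha] = beta) ->
  forall f : {poly F}, f \in U -> f.[alpha] = beta.
Proof. exact: lemma7_aux. Qed.
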